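(* Let $\sigma:[0,\infty)\to[0,\infty)$ be nondecreasing with $\lim_{t\to\infty}\sigma(t)=\infty$. Assume that $\sigma^{\iota}\sim((\sigma^{\iota})_{\star})^{\star}$ on $(0,\infty)$. Then $\gamma(\sigma)+1=\gamma((\sigma^{\iota})_{\star})$.
   Context: $\sigma^{\iota}(t):=\sigma(1/t)$ for $t>0$ (nonincreasing, tending to $\infty$ as $t\to0$). For $h:(0,\infty)\to[0,\infty)$ nonincreasing with $\lim_{t\to0}h(t)=\infty$, its lower Legendre conjugate is $h_{\star}(t):=\inf_{s>0}\{h(s)+ts\}$, $t\ge0$ (nondecreasing, concave, tending to $\infty$). For a nondecreasing $g$, its upper Legendre conjugate is $g^{\star}(s):=\sup_{t\ge0}\{g(t)-st\}$, $s>0$; $((\sigma^{\iota})_{\star})^{\star}$ is the largest convex minorant of $\sigma^{\iota}$. $f\sim g$ on an interval $I$ means there is $C\ge1$ with $C^{-1}g-C\le f\le Cg+C$ on $I$. For a nondecreasing function $\sigma$ tending to $\infty$ and $\gamma>0$, $(P_{\sigma,\gamma})$ holds if there is $K>1$ with $\limsup_{t\to\infty}\sigma(K^{\gamma}t)/\sigma(t)<K$; $\gamma(\sigma):=\sup\{\gamma>0:(P_{\sigma,\gamma})\text{ holds}\}$, and $:=0$ if none holds. *)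

(* Defs.v *)
From HB Require Import structures.
From mathcomp Require Import all_boot all_order all_algebra.
From mathcomp Require Import all_classical all_reals all_analysis.
Set Implicit Arguments. Unset Strict Implicit. Unset Printing Implicit Defensive.
Import Order.TTheory GRing.Theory Num.Theory.
Import numFieldNormedType.Exports.
Local Open Scope classical_set_scope.
Local Open Scope ring_scope.

Section Defs.
Variable R : realType.

Definition iota_fun (sigma : R -> R) : R -> R := fun t => sigma (t^-1).

Definition lower_conj (h : R -> R) : R -> R :=
  fun t => inf [set h s + t * s | s in [set s : R | 0 < s]].

Definition upper_conj (g : R -> R) : R -> \bar R :=
  fun s => ereal_sup [set ((g t - s * t)%:E) | t in [set t : R | 0 <= t]].

Definition equiv_pos (f : R -> R) (g : R -> \bar R) : Prop :=
  exists C : R, 1 <= C /\ forall t : R, 0 < t ->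
    ((C^-1)%:E * g t - C%:E <= (f t)%:E)%E /\ ((f t)%:E <= C%:E * g t + C%:E)%E.

Definition P_prop (sigma : R -> R) (gamma : R) : Prop :=
  exists K : R, 1 < K /\
    (limf_esup (fun t : R => ((sigma (K `^ gamma * t)) / sigma t)%:E)
               (pinfty_nbhs R) < K%:E)%E.

(* gamma(sigma) := sup {gamma > 0 | P_{sigma,gamma}}, and 0 if that set is empty *)
Definition gamma_index (sigma : R -> R) : \bar R :=
  ereal_sup ([set 0%E] `|` [set (g%:E) | g in [set g : R | 0 < g /\ P_prop sigma g]]).

End Defs.

(* Main.v *)
Require Import Defs.
From HB Require Import structures.
From mathcomp Require Import all_boot all_order all_algebra.
From mathcomp Require Import all_classical all_reals all_analysis.
From mathcomp Require Import ring lra.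
Import Order.TTheory GRing.Theory Num.Theory.
Import numFieldNormedType.Exports.
Local Open Scope classical_set_scope.
Local Open Scope ring_scope.

Section Aux.
Variable R : realType.

Definition Ub (f : R -> R) (a : R) := exists C T : R, 0 < C /\ 0 < T /\
  forall l t, 1 <= l -> T <= t -> f (l * t) <= C * l `^ a * f t.

Lemma powR_gt1 (K g : R) : 1 < K -> 0 < g -> 1 < K `^ g.
Proof.
move=> K1 g0; rewrite /powR gt_eqF ?(lt_trans _ K1)//.
by rewrite expR_gt1 mulr_gt0// ln_gt0.
Qed.

Lemma limsup_le (f : R -> R) (M B : R) :
  (forall t, M < t -> f t <= B) ->
  (limf_esup (fun t => (f t)%:E) (pinfty_nbhs R) <= B%:E)%E.
Proof.
move=> H.
apply: (@le_trans _ _ (ereal_sup [set (f x)%:E | x in [set t | M < t]])).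
  apply: ereal_inf_lbound; exists [set t | M < t] => //.
  by exists M; split; [exact: num_real|].
by apply: ge_ereal_sup => _ [x Mx <-]; rewrite lee_fin H.
Qed.

Lemma U_P (f : R -> R) (a g : R) : 0 < g -> a * g < 1 ->
  (exists M, forall t, M < t -> 0 < f t) -> Ub f a -> P_prop f g.
Proof.
move=> g0 ag1 [M fpos] [C [T [C0 [T0 HU]]]].
set e := 1 - a * g.
have e0 : 0 < e by rewrite /e subr_gt0.
set K := (C + 2) `^ (e^-1).
have K1 : 1 < K by apply: powR_gt1; [lra| rewrite invr_gt0].
have K0 : 0 < K by lra.
have Ke : K `^ e = C + 2.
  by rewrite /K -powRrM mulVf ?gt_eqF// powRr1//; lra.
have KD : K = K `^ (g * a) * (C + 2).
  rewrite -Ke -powRD; last by apply/implyP => _; rewrite gt_eqF.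
  by rewrite /e mulrC addrC subrK powRr1// ltW.
exists K; split => //.
apply: (@le_lt_trans _ _ (C * K `^ (g * a))%:E); last first.
  rewrite lte_fin {2}KD mulrC ltr_pM2l ?powR_gt0//; lra.
apply: (@limsup_le _ (Num.max M T)) => t.
rewrite gt_max => /andP[Mt Tt].
have ft := fpos _ Mt.
rewrite ler_pdivrMr// -mulrA; apply: le_trans.
  apply: HU; last exact: ltW.
  by rewrite -(powRr0 K) ler_powR ?ltW.
by rewrite -powRrM mulrA.
Qed.


Lemma le_max_l (x y : R) : x <= Num.max x y.
Proof. by rewrite le_max lexx. Qed.
Lemma le_max_r (x y : R) : y <= Num.max x y.
Proof. by rewrite le_max lexx orbT. Qed.

Lemma final_ineq (X S P : R) : 1 <= X -> 1 <= S -> 0 <= P ->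
  X * (S + P) + 1 <= (2 + P) * X * S.
Proof.
move=> X1 S1 P0.
have h1 : 1 <= X * S by rewrite -[1]mul1r ler_pM //; lra.
have h2 : 0 <= X * P * (S - 1) by rewrite !mulr_ge0//; lra.
nra.
Qed.

Lemma bernoulli_exp (q : R) n : 1 <= q -> 1 + n%:R * (q - 1) <= q ^+ n.
Proof.
move=> q1; elim: n => [|n IH]; first by rewrite mul0r addr0 expr0.
rewrite exprS.
have n0 : 0 <= n%:R :> R by [].
apply: le_trans (_ : q * (1 + n%:R * (q - 1)) <= _); last first.
  by apply: ler_wpM2l => //; lra.
have := mulr_ge0 n0 (sqr_ge0 (q - 1)).
rewrite -natr1; nra.
Qed.

Lemma arch_pow (q l : R) : 1 < q -> exists n, l <= q ^+ n.
Proof.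
move=> q1; exists (Num.trunc (`|l| / (q - 1))).+1.
have B := bernoulli_exp q (Num.trunc (`|l| / (q - 1))).+1 (ltW q1).
have := truncnS_gt (`|l| / (q - 1)).
rewrite ltr_pdivrMr ?subr_gt0// => H.
have := ler_norm l; lra.
Qed.

Lemma P_U (f : R -> R) (g : R) : 0 < g ->
  (forall t, 0 <= t -> 0 <= f t) ->
  (forall s t, 0 <= s -> s <= t -> f s <= f t) ->
  (exists M, forall t, M < t -> 0 < f t) -> P_prop f g ->
  exists a, 0 <= a /\ a * g < 1 /\ Ub f a.
Proof.
move=> g0 fge0 fmon [M fpos] [K [K1 HK]].
have [_ [V [M1 [_ HV]] <-] yK] := ereal_inf_lt HK.
set ratio := fun t => f (K `^ g * t) / f t.
have [L [L1 [LK HL]]] : exists L, 1 <= L /\ L < K /\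
    forall t, M1 < t -> ratio t <= L.
  move: yK.
  set y := ereal_sup _.
  have Hy : forall t, M1 < t -> ((ratio t)%:E <= y)%E.
    by move=> t Mt; apply: ereal_sup_ubound; exists t => //; apply: HV.
  case: y Hy => [r| |] Hy yK.
  - exists (Num.max r 1); split; first by rewrite le_max lexx orbT.
    split; first by rewrite gt_max K1 andbT -lte_fin.
    by move=> t Mt; rewrite le_max -lee_fin Hy.
  - by [].
  - by have := Hy (M1 + 1); rewrite leeNy_eq ltrDl ltr01 => /(_ isT).
set q := K `^ g.
have q1 : 1 < q by apply: powR_gt1.
have lnq : 0 < ln q by apply: ln_gt0.
set a := ln L / ln q.
have a0 : 0 <= a by apply: divr_ge0; [exact: ln_ge0| exact: ltW].
have qa : q `^ a = L.
  by rewrite /powR gt_eqF ?(lt_trans _ q1)// /a divfK ?gt_eqF// lnK// posrE; lra.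
exists a; split => //; split.
  rewrite /a /q ln_powR.
  have lnK0 : 0 < ln K by apply: ln_gt0.
  have -> : ln L / (g * ln K) * g = ln L / ln K.
    by field; rewrite !gt_eqF.
  rewrite ltr_pdivrMr// mul1r ltr_ln// posrE; lra.
set T := Num.max (Num.max M1 M) 0 + 1.
have TM1 : M1 < T by rewrite /T; have := le_max_l (Num.max M1 M) 0; have := le_max_l M1 M; lra.
have TM : M < T by rewrite /T; have := le_max_l (Num.max M1 M) 0; have := le_max_r M1 M; lra.
have T0 : 0 < T by rewrite /T; have := le_max_r (Num.max M1 M) 0; lra.
have step : forall t, T <= t -> f (q * t) <= L * f t.
  move=> t Tt; have ft : 0 < f t by apply: fpos; lra.
  by rewrite -ler_pdivrMr//; apply: HL; lra.
have S : forall n l t, 1 <= l -> l <= q ^+ n -> T <= t -> f (l * t) <= L * l `^ a * f t.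
  elim=> [|n IH] l t l1 lq Tt.
    have -> : l = 1 by rewrite expr0 in lq; apply/eqP; rewrite eq_le lq l1.
    by rewrite mul1r powR1 mulr1 ler_peMl ?fge0//; lra.
  have ft : 0 < f t by apply: fpos; lra.
  have [lq'|ql] := leP l q.
    apply: le_trans (_ : f (q * t) <= _).
      by apply: fmon; [rewrite mulr_ge0//; lra| rewrite ler_pM2r//; lra].
    apply: le_trans (step _ Tt) _.
    rewrite ler_pM2r// ler_peMr//; first lra.
    by rewrite -(powRr0 l) ler_powR.
  have q0 : 0 < q by lra.
  have -> : l * t = (l / q) * (q * t) by rewrite mulrA divfK ?gt_eqF.
  apply: le_trans.
    apply: IH; first by rewrite ler_pdivlMr// mul1r ltW.
      by rewrite ler_pdivrMr// mulrC -exprS.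
    by rewrite -[T]mul1r ler_pM//; lra.
  apply: le_trans.
    apply: ler_wpM2l; last exact: step.
    by rewrite mulr_ge0 ?powR_ge0//; lra.
  rewrite !mulrA ler_pM2r// -mulrA ler_pM2l; last lra.
  rewrite -{1}qa -powRM; last 2 first.
      by rewrite divr_ge0//; lra.
    lra.
  by rewrite divfK ?gt_eqF.
exists L, T; split; first lra; split => // l t l1 Tt.
have [n ln] := @arch_pow q l q1.
exact: S ln Tt.
Qed.


Section Phi.
Variable sigma : R -> R.
Hypothesis snn : forall t : R, 0 <= t -> 0 <= sigma t.
Hypothesis smon : forall s t : R, 0 <= s -> s <= t -> sigma s <= sigma t.

Local Notation phi := (lower_conj (iota_fun sigma)).

Lemma phi_set_lb t : 0 <= t ->
  lbound [set iota_fun sigma s + t * s | s in [set s : R | 0 < s]] 0.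
Proof.
move=> t0 _ [s s0 <-]; rewrite /iota_fun addr_ge0 ?mulr_ge0 ?snn//.
  by rewrite invr_ge0 ltW.
exact: ltW.
Qed.

Lemma phi_le {t s : R} : 0 <= t -> 0 < s -> phi t <= sigma s^-1 + t * s.
Proof.
move=> t0 s0; apply: ge_inf; last by exists s.
by exists 0; apply: phi_set_lb.
Qed.

Lemma phi_ge t m : 0 <= t -> (forall s, 0 < s -> m <= sigma s^-1 + t * s) -> m <= phi t.
Proof.
move=> t0 H; apply: lb_le_inf.
  by exists (iota_fun sigma 1 + t * 1); exists 1; rewrite //= ltr01.
by move=> _ [s s0 <-]; apply: H.
Qed.

Lemma phi_ge0 t : 0 <= t -> 0 <= phi t.
Proof.
move=> t0; apply: phi_ge => // s s0.
by apply: addr_ge0; [apply: snn; rewrite invr_ge0 ltW | apply: mulr_ge0 => //; exact: ltW].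
Qed.

Lemma phi_mon t1 t2 : 0 <= t1 -> t1 <= t2 -> phi t1 <= phi t2.
Proof.
move=> t10 t12; apply: phi_ge; first exact: le_trans t12.
move=> s s0; apply: le_trans (phi_le t10 s0) _.
by rewrite lerD2l ler_pM2r.
Qed.

Lemma phi_U1 : Ub phi 1.
Proof.
exists 1, 1; split => //; split => // l t l1 t1.
have t0 : 0 <= t by apply: le_trans t1.
rewrite mul1r powRr1; last by apply: le_trans l1.
have l0 : 0 < l by apply: lt_le_trans l1.
rewrite -ler_pdivrMl//; apply: phi_ge => // s s0.
rewrite ler_pdivrMl// mulrDr mulrA; apply: le_trans (phi_le _ s0) _.
  by rewrite mulr_ge0// ltW.
rewrite lerD2r ler_peMl// ?snn// invr_ge0 ltW//.
Qed.

Lemma phi_pos : (exists M, forall t, M < t -> 1 <= sigma t) ->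
  exists M, forall t, M < t -> 0 < phi t.
Proof.
move=> [M HM]; set M0 := Num.max M 1.
have M0M : M <= M0 := le_max_l _ _.
have M01 : 1 <= M0 := le_max_r _ _.
exists M0 => t Mt.
have t0 : 0 < t by lra.
apply: (@lt_le_trans _ _ 1); first exact: ltr01.
apply: phi_ge; first exact: ltW.
move=> s s0.
have ss : 0 <= sigma s^-1 by apply: snn; rewrite invr_ge0 ltW.
have ts : 0 <= t * s by rewrite mulr_ge0// ltW.
have [sM|Ms] := ltP M0 s^-1.
  by have := HM s^-1 (le_lt_trans M0M sM); lra.
have : M0^-1 <= s.
  by rewrite -(invrK s) lef_pV2 ?posrE ?invr_gt0//; lra.
rewrite -(ler_pM2l t0) => H.
have : 1 <= t * M0^-1 by rewrite ler_pdivlMr; lra.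
lra.
Qed.

Lemma phi_forward a : 0 <= a -> Ub sigma a -> Ub phi (a / (1 + a)).
Proof.
move=> a0 [C [T [C0 [T0 HU]]]].
set b := a / (1 + a).
have sT : 0 <= sigma T by apply: snn; exact: ltW.
set T' := T * C * sigma T + 1.
have T'0 : 0 < T' by rewrite /T' ltr_wpDl// !mulr_ge0// ltW.
exists (C + 2), T'; split; first lra; split => // l t l1 Tt.
have l0 : 0 < l by lra.
have t0 : 0 < t by lra.
set p := l `^ (1 + a)^-1.
have p1 : 1 <= p.
  rewrite /p -[X in X <= _](powRr0 l) ler_powR// invr_ge0; lra.
have p0 : 0 < p by lra.
have pa : p `^ a = l `^ b by rewrite /p -powRrM /b mulrC.
have lp : l / p = l `^ b.
  apply: (mulIf (negbT (gt_eqF p0))); rewrite divfK ?gt_eqF// /p -powRD; last first.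
    by apply/implyP => _; rewrite gt_eqF.
  have -> : b + (1 + a)^-1 = 1.
    by rewrite /b; field; rewrite gt_eqF//; lra.
  by rewrite powRr1// ltW.
have lb0 : 0 < l `^ b by apply: powR_gt0.
have ft0 : 0 <= phi t by apply: phi_ge0; exact: ltW.
rewrite -ler_pdivrMl ?mulr_gt0//; first last.
  by lra.
apply: phi_ge; first exact: ltW.
move=> s s0.
rewrite ler_pdivrMl ?mulr_gt0//; last lra.
have ss : 0 <= sigma s^-1 by apply: snn; rewrite invr_ge0 ltW.
have ts : 0 <= t * s by rewrite mulr_ge0// ltW.
have lt0 : 0 <= l * t by rewrite mulr_ge0// ltW.
have [Ts|sT'] := leP T s^-1.
  have sp0 : 0 < s / p by rewrite divr_gt0.
  apply: le_trans (phi_le lt0 sp0) _.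
  rewrite invf_div.
  have H1 := HU p s^-1 p1 Ts.
  rewrite pa in H1.
  have -> : l * t * (s / p) = l `^ b * (t * s) by rewrite -lp; field; rewrite gt_eqF.
  have : C * l `^ b * sigma s^-1 <= (C + 2) * l `^ b * sigma s^-1.
    by apply: ler_wpM2r => //; apply: ler_wpM2r; [exact: ltW | lra].
  have : l `^ b * (t * s) <= (C + 2) * l `^ b * (t * s).
    by rewrite -[leLHS]mul1r mulrA ler_wpM2r// ler_pM2r; lra.
  lra.
have pT0 : 0 < (p * T)^-1 by rewrite invr_gt0 mulr_gt0.
apply: le_trans (phi_le lt0 pT0) _.
rewrite invrK.
have H1 := HU p T p1 (lexx T).
rewrite pa in H1.
have -> : l * t * (p * T)^-1 = l `^ b * (t / T) by rewrite -lp; field; rewrite !gt_eqF.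
have CT : C * sigma T <= t / T.
  rewrite ler_pdivlMr// mulrC mulrA; rewrite /T' in Tt; lra.
have tTs : t / T <= t * s.
  rewrite ler_pM2l// -(invrK s) lef_pV2 ?posrE ?invr_gt0//; lra.
have : C * l `^ b * sigma T <= l `^ b * (t / T).
  by rewrite [C * _]mulrC -mulrA ler_pM2l.
have : l `^ b * (t / T) <= l `^ b * (t * s) by rewrite ler_pM2l.
have : 2 * l `^ b * (t * s) <= (C + 2) * l `^ b * (t * s).
  by rewrite ler_wpM2r// ler_pM2r; lra.
have : 0 <= (C + 2) * l `^ b * sigma s^-1 by rewrite !mulr_ge0//; lra.
lra.
Qed.

Lemma conj_ge s t : 0 < s -> 0 <= t -> ((phi t - s * t)%:E <= upper_conj phi s)%E.
Proof. by move=> s0 t0; apply: ereal_sup_ubound; exists t. Qed.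

Lemma phi_reverse b b' : 0 <= b -> b < b' -> b' < 1 -> Ub phi b ->
  equiv_pos (iota_fun sigma) (upper_conj phi) ->
  (exists M, forall t, M < t -> 1 <= sigma t) ->
  Ub sigma (b' / (1 - b')).
Proof.
move=> b0 bb' b'1 [C [T [C0 [T0 HU]]]] [D [D1 Heq]] [M HM].
set a' := b' / (1 - b').
set d := b' - b.
have d0 : 0 < d by rewrite /d subr_gt0.
set L0 := Num.max 1 (C `^ d^-1).
have L01 : 1 <= L0 := le_max_l _ _.
have phiT : 0 <= phi T by apply: phi_ge0; exact: ltW.
have HA : forall l tau, L0 <= l -> T <= tau -> phi (l * tau) <= l `^ b' * phi tau.
  move=> l tau Ll Ttau.
  have l1 : 1 <= l by apply: le_trans Ll.
  have l0 : 0 < l by lra.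
  apply: le_trans (HU l tau l1 Ttau) _.
  apply: ler_wpM2r; first by apply: phi_ge0; lra.
  have -> : b' = d + b by rewrite /d subrK.
  rewrite powRD; last by apply/implyP => _; rewrite gt_eqF.
  apply: ler_wpM2r; first exact: powR_ge0.
  have -> : C = (C `^ d^-1) `^ d.
    by rewrite -powRrM mulVf ?gt_eqF// powRr1// ltW.
  apply: ge0_ler_powR; first exact: ltW.
  - by rewrite nnegrE powR_ge0.
  - by rewrite nnegrE; lra.
  - by apply: le_trans Ll; exact: le_max_r.
have HB : forall l lam s, L0 <= l -> 0 < lam -> lam * l `^ b' = l -> 0 < s ->
    (upper_conj phi (s / lam) <= (l `^ b' * (sigma s^-1 + phi T))%:E)%E.
  move=> l lam s Ll lam0 Hlam s0.
  have l1 : 1 <= l by apply: le_trans Ll.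
  have l0 : 0 < l by lra.
  have lb0 : 0 < l `^ b' by apply: powR_gt0.
  have ss : 0 <= sigma s^-1 by apply: snn; rewrite invr_ge0 ltW.
  apply: ge_ereal_sup => _ [t t0 <-]; rewrite lee_fin.
  have [lTt|tlT] := leP (l * T) t.
    set tau := t / l.
    have Ttau : T <= tau by rewrite /tau ler_pdivlMr// mulrC.
    have tau0 : 0 <= tau by lra.
    have -> : t = l * tau by rewrite /tau mulrC divfK ?gt_eqF.
    have E1 := HA l tau Ll Ttau.
    have E2 := phi_le tau0 s0.
    have -> : s / lam * (l * tau) = l `^ b' * (tau * s).
      rewrite -{1}Hlam; field; rewrite gt_eqF//.
    have : l `^ b' * phi tau <= l `^ b' * (sigma s^-1 + tau * s).
      by rewrite ler_pM2l.
    have : 0 <= l `^ b' * phi T by rewrite mulr_ge0// ltW.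
    rewrite mulrDr; lra.
  have E1 : phi t <= phi (l * T) by apply: phi_mon => //; exact: ltW.
  have E2 := HA l T Ll (lexx T).
  have : 0 <= s / lam * t by rewrite mulr_ge0// divr_ge0// ltW.
  have : 0 <= l `^ b' * sigma s^-1 by rewrite mulr_ge0// ltW.
  rewrite mulrDr; lra.
have a'0 : 0 <= a' by rewrite /a' divr_ge0// ?subr_ge0; lra.
set lam0 := L0 `^ (1 - b').
have lam01 : 1 <= lam0.
  by rewrite /lam0 -[X in X <= _](powRr0 L0) ler_powR//; lra.
set M0 := Num.max M 1.
exists (D * (2 + phi T) * lam0 `^ a'), (M0 + 1); split.
  by rewrite !mulr_gt0 ?powR_gt0//; lra.
split; first by rewrite /M0; have := le_max_r M 1; lra.
move=> lam u lam1 Mu.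
have u0 : 0 < u by rewrite /M0 in Mu; have := le_max_r M 1; lra.
have su1 : 1 <= sigma u by apply: HM; rewrite /M0 in Mu; have := le_max_l M 1; lra.
set lam1' := Num.max lam lam0.
have lam1'1 : 1 <= lam1' by apply: le_trans lam1 (le_max_l _ _).
have lam1'0 : 0 < lam1' by lra.
set l := lam1' `^ (1 - b')^-1.
have e1 : (1 - b') * (1 - b')^-1 = 1 by rewrite mulfV// gt_eqF//; lra.
have Ll : L0 <= l.
  apply: (le_trans (_ : L0 <= (L0 `^ (1 - b')) `^ (1 - b')^-1)).
    by rewrite -powRrM e1 powRr1//; lra.
  apply: ge0_ler_powR.
  - by rewrite invr_ge0; lra.
  - by rewrite nnegrE powR_ge0.
  - by rewrite nnegrE; lra.
  - exact: le_max_r.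
have Hl : lam1' * l `^ b' = l.
  rewrite /l -!powRrM.
  rewrite -[X in X * _ = _](@powRr1 R lam1'); last lra.
  rewrite -powRD; last by apply/implyP => _; rewrite gt_eqF.
  congr (_ `^ _); field; rewrite gt_eqF//; lra.
have lba : l `^ b' = lam1' `^ a' by rewrite /l -powRrM /a' mulrC.
have sinv : (u^-1 / lam1')^-1 = lam1' * u by rewrite invf_div invrK mulrC.
have ui0 : 0 < u^-1 by rewrite invr_gt0.
have HB' := HB l lam1' u^-1 Ll lam1'0 Hl ui0.
rewrite invrK lba in HB'.
have D0 : 0 < D by lra.
have E1 : sigma (lam1' * u) <= D * (lam1' `^ a' * (sigma u + phi T)) + D.
  have [_ H] := Heq _ (divr_gt0 ui0 lam1'0).
  rewrite /iota_fun sinv in H.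
  rewrite -lee_fin EFinD EFinM; apply: le_trans H _.
  by apply: leeD2r; apply: lee_wpmul2l => //; rewrite lee_fin ltW.
have E2 : sigma (lam * u) <= sigma (lam1' * u).
  apply: smon; first by rewrite mulr_ge0//; lra.
  by rewrite ler_pM2r//; exact: le_max_l.
have X1 : 1 <= lam1' `^ a'.
  by rewrite -[X in X <= _](powRr0 lam1') ler_powR.
have lam0p : 0 <= lam0 by apply: le_trans lam01.
have lamp : 0 <= lam by apply: le_trans lam1.
have E3 : lam1' `^ a' <= lam0 `^ a' * lam `^ a'.
  rewrite -(powRM _ lam0p lamp).
  apply: ge0_ler_powR => //.
  - by rewrite nnegrE; apply: le_trans lam1'1.
  - by rewrite nnegrE mulr_ge0.
  rewrite /lam1' ge_max; apply/andP; split.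
    by rewrite ler_peMl.
  by rewrite ler_peMr.
have E4 := @final_ineq _ _ _ X1 su1 phiT.
have E5 : (2 + phi T) * lam1' `^ a' * sigma u <=
          (2 + phi T) * (lam0 `^ a' * lam `^ a') * sigma u.
  apply: ler_wpM2r; first by apply: snn; exact: ltW.
  by apply: ler_wpM2l => //; rewrite addr_ge0.
have E6 : D * (lam1' `^ a' * (sigma u + phi T)) + D <=
          D * ((2 + phi T) * (lam0 `^ a' * lam `^ a') * sigma u).
  rewrite -[X in _ + X]mulr1 -mulrDr; apply: ler_wpM2l; first exact: ltW.
  exact: le_trans E4 E5.
apply: le_trans E2 _; apply: le_trans E1 _; apply: le_trans E6 _.
have -> : D * ((2 + phi T) * (lam0 `^ a' * lam `^ a') * sigma u) =
  D * (2 + phi T) * lam0 `^ a' * lam `^ a' * sigma u by rewrite !mulrA.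
exact: lexx.
Qed.

End Phi.

End Aux.

Lemma gamma_ineq1 (R : realType) (a g : R) : 0 <= a -> a * g < 1 -> 0 < g ->
  a / (1 + a) * (g + 1) < 1.
Proof.
move=> a0 ag g0.
have a1 : 0 < 1 + a by lra.
rewrite mulrAC ltr_pdivrMr// mul1r mulrDr mulr1; lra.
Qed.

Lemma gamma_ineq2 (R : realType) (b d : R) : 0 < b -> b * d < 1 -> b < 1 ->
  b / (1 - b) * (d - 1) < 1.
Proof.
move=> b0 bd b1.
have a1 : 0 < 1 - b by lra.
rewrite mulrAC ltr_pdivrMr// mul1r mulrBr mulr1; lra.
Qed.

Theorem proposition2p22 (R : realType) (sigma : R -> R) :
  (forall t : R, 0 <= t -> 0 <= sigma t) ->
  (forall s t : R, 0 <= s -> s <= t -> sigma s <= sigma t) ->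
  sigma x @[x --> +oo] --> +oo ->
  equiv_pos (iota_fun sigma) (upper_conj (lower_conj (iota_fun sigma))) ->
  (gamma_index sigma + 1%E)%E = gamma_index (lower_conj (iota_fun sigma)).
Proof.
move=> snn smon slim heq.
set phi := lower_conj (iota_fun sigma).
have hM : exists M, forall t, M < t -> 1 <= sigma t.
  by move: slim => /cvgryPge /(_ 1) [M [_ HM]]; exists M => t Mt; exact: HM.
have spos : exists M, forall t, M < t -> 0 < sigma t.
  by case: hM => M HM; exists M => t Mt; apply: lt_le_trans (HM t Mt).
have ppos := @phi_pos R sigma snn hM.
have pnn : forall t, 0 <= t -> 0 <= phi t := @phi_ge0 R sigma snn.
have pmon : forall s t, 0 <= s -> s <= t -> phi s <= phi t := @phi_mon R sigma snn.
have F1 : forall g, 0 < g -> P_prop sigma g -> P_prop phi (g + 1).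
  move=> g g0 Pg.
  have [a [a0 [ag HU]]] := @P_U R sigma g g0 snn smon spos Pg.
  apply: (@U_P R _ (a / (1 + a))); first lra.
  - exact: gamma_ineq1.
  - exact: ppos.
  - exact: (@phi_forward R sigma snn).
have F2 : forall g, 0 < g -> g < 1 -> P_prop phi g.
  move=> g g0 g1; apply: (@U_P R _ 1) => //; first by rewrite mul1r.
  exact: (@phi_U1 R sigma snn).
have F3 : forall d, 1 < d -> P_prop phi d -> P_prop sigma (d - 1).
  move=> d d1 Pd.
  have d0 : 0 < d by lra.
  have [b [b0 [bd HU]]] := @P_U R phi d d0 pnn pmon ppos Pd.
  have di : b < d^-1 by rewrite -[d^-1]mul1r ltr_pdivlMr.
  have di1 : d^-1 < 1 by rewrite invf_lt1.
  set b' := (b + d^-1) / 2.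
  have bb' : b < b' by rewrite /b'; lra.
  have b'd : b' < d^-1 by rewrite /b'; lra.
  have b'1 : b' < 1 by lra.
  have b'0 : 0 < b' by lra.
  apply: (@U_P R _ (b' / (1 - b'))); first lra.
  - apply: gamma_ineq2 => //.
    by rewrite -ltr_pdivlMr// mul1r.
  - exact: spos.
  - exact: (@phi_reverse R sigma snn smon _ _ b0 bb' b'1 HU heq hM).
rewrite /gamma_index; apply/eqP; rewrite eq_le; apply/andP; split.
- rewrite -leeBrDr//.
  apply: ge_ereal_sup => x [->|[g [g0 Pg] <-]].
  + rewrite leeBrDr// add0e.
    case E: (ereal_sup _) => [r| |] //.
    * rewrite lee_fin leNgt; apply/negP => r1.
      have r0 : (0 <= r%:E)%E by rewrite -E; apply: ereal_sup_ubound; left.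
      rewrite lee_fin in r0.
      have : (((r + 1) / 2)%:E <= r%:E)%E.
        rewrite -E; apply: ereal_sup_ubound; right; exists ((r + 1) / 2) => //.
        split; first lra.
        by apply: F2; lra.
      rewrite lee_fin; lra.
    * by rewrite leey.
    * have : (0 <= (-oo : \bar R))%E by rewrite -E; apply: ereal_sup_ubound; left.
      by [].
  + rewrite leeBrDr// -EFinD; apply: ereal_sup_ubound; right.
    exists (g + 1) => //; split; first lra.
    exact: F1.
- apply: ge_ereal_sup => x [->|[d [d0 Pd] <-]].
  + by apply: adde_ge0 => //; apply: ereal_sup_ubound; left.
  + have [d1|d1] := leP d 1.
      apply: le_trans (_ : (1%:E <= _)%E).
        by rewrite lee_fin.
      by rewrite leeDr//; apply: ereal_sup_ubound; left.
    have -> : d = (d - 1) + 1 by rewrite subrK.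
    rewrite EFinD; apply: leeD2r; apply: ereal_sup_ubound; right.
    exists (d - 1) => //; split; first lra.
    exact: F3.
Qed.
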